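(* If $q$ is a prime power, $n\in\mathbb Z^+$ and $M\cong\mathrm{PG}(n-1,q)$, then $\mathcal T_n(M)$ is a tangle of order $n$ in $M$.
   Context: For a matroid $M$ and $X\subseteq E(M)$, $\lambda_M(X)=r_M(X)+r_M(E(M)-X)-r(M)$; $X$ is $k$-separating if $\lambda_M(X)<k$. For an integer $k$, $\mathcal T_k(M)$ is the collection of $(k-1)$-separating subsets of $E(M)$ that are neither spanning nor cospanning. For $\theta\in\mathbb Z^+$, a collection $\mathcal T$ of subsets of $E(M)$ is a tangle of order $\theta$ if: (i) every set in $\mathcal T$ is $(\theta-1)$-separating, and for each $(\theta-1)$-separating set $X$, either $X\in\mathcal T$ or $E(M)-X\in\mathcal T$; (ii) no three sets in $\mathcal T$ have union $E(M)$; (iii) $E(M)-\{e\}\notin\mathcal T$ for each $e\in E(M)$. *)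

(* Defs.v *)
From mathcomp Require Import all_boot all_algebra.
Set Implicit Arguments. Unset Strict Implicit. Unset Printing Implicit Defensive.
Import GRing.Theory.

Record matroid (E : finType) := Matroid {
  rk : {set E} -> nat;
  rk_card : forall X, rk X <= #|X|;
  rk_mono : forall X Y : {set E}, X \subset Y -> rk X <= rk Y;
  rk_submod : forall X Y : {set E}, rk (X :|: Y) + rk (X :&: Y) <= rk X + rk Y
}.

Section MatroidDefs.
Variables (E : finType) (M : matroid E).

Definition mrank : nat := rk M setT.

(* lambda_M(X) = r(X) + r(E - X) - r(M)  (always >= 0 by submodularity) *)
Definition conn (X : {set E}) : nat := rk M X + rk M (~: X) - mrank.

Definition separating (k : nat) (X : {set E}) : bool := conn X < k.

Definition spanning (X : {set E}) : bool := rk M X == mrank.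

Definition dual_rk (X : {set E}) : nat := #|X| + rk M (~: X) - mrank.

Definition cospanning (X : {set E}) : bool := dual_rk X == dual_rk setT.

Definition Tcal (k : nat) : {set {set E}} :=
  [set X | separating k.-1 X && ~~ spanning X && ~~ cospanning X].

Definition is_tangle (theta : nat) (T : {set {set E}}) : Prop :=
  [/\ 0 < theta,
      (forall X : {set E}, X \in T -> separating theta.-1 X),
      (forall X : {set E}, separating theta.-1 X -> X \in T \/ ~: X \in T),
      (forall X Y Z : {set E}, X \in T -> Y \in T -> Z \in T -> X :|: Y :|: Z != setT)
    & (forall e : E, ~: [set e] \notin T)].

(* M is isomorphic to PG(n-1, F): there is a bijection e |-> <f e> from E
   onto the set of 1-dimensional subspaces of F^n (points of PG(n-1,F))
   such that r_M(X) is the dimension of the span of the points of X. *)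
Definition iso_PG (F : finFieldType) (n : nat) : Prop :=
  exists f : E -> 'rV[F]_n,
    [/\ (forall e, f e != 0)%R,
        (forall e e', (f e == f e')%MS -> e = e'),
        (forall v : 'rV[F]_n, (v != 0)%R -> exists e, (v == f e)%MS)
      & (forall X : {set E}, rk M X = \rank (\sum_(e in X) <<f e>>)%MS)].

End MatroidDefs.

(* Main.v *)
Require Import Defs.
From mathcomp Require Import all_boot all_algebra.
From mathcomp Require Import zify.
Set Implicit Arguments. Unset Strict Implicit. Unset Printing Implicit Defensive.
Import GRing.Theory.

Section PG.
Variables (F : finFieldType) (n : nat) (E : finType) (M : matroid E).
Variable f : E -> 'rV[F]_n.
Hypothesis f0 : forall e, (f e != 0)%R.
Hypothesis fsurj : forall v : 'rV[F]_n, (v != 0)%R -> exists e, (v == f e)%MS.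
Hypothesis frk : forall X, rk M X = \rank (\sum_(e in X) <<f e>>)%MS.

Local Notation span X := (\sum_(e in X) <<f e>>)%MS.

Lemma sub_span e (X : {set E}) : e \in X -> (f e <= span X)%MS.
Proof. move=> eX; apply: (sumsmx_sup e) => //; by rewrite genmxE. Qed.

Lemma no_vec (U : 'M[F]_n) : \rank U < n -> exists v : 'rV[F]_n, ~~ (v <= U)%MS.
Proof.
move=> hU; case: (boolP [exists v : 'rV[F]_n, ~~ (v <= U)%MS]) => [/existsP//|/existsPn H].
have : ((1%:M)%R <= U)%MS by apply/row_subP => i; have := H (row i (1%:M)%R); rewrite negbK.
move/mxrankS; rewrite mxrank1 => h; by rewrite ltnNge h in hU.
Qed.

Lemma subL (a b : 'rV[F]_n) (U : 'M[F]_n) : ((a + b)%R <= U)%MS -> (a <= U)%MS -> (b <= U)%MS.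
Proof.
move=> h1 h2; have -> : b = ((a + b) + - a)%R by rewrite addrAC subrr add0r.
by apply: addmx_sub => //; rewrite eqmx_opp.
Qed.

Lemma subR (a b : 'rV[F]_n) (U : 'M[F]_n) : ((a + b)%R <= U)%MS -> (b <= U)%MS -> (a <= U)%MS.
Proof. by rewrite addrC; apply: subL. Qed.

Lemma two (U1 U2 : 'M[F]_n) : \rank U1 < n -> \rank U2 < n ->
  exists v : 'rV[F]_n, ~~ (v <= U1)%MS && ~~ (v <= U2)%MS.
Proof.
move=> h1 h2; have [a Ha] := no_vec h1; have [b Hb] := no_vec h2.
case: (boolP (a <= U2)%MS) => Ha2; last by exists a; rewrite Ha Ha2.
case: (boolP (b <= U1)%MS) => Hb1; last by exists b; rewrite Hb Hb1.
exists (a + b)%R; apply/andP; split; apply/negP => h.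
- by move: Ha; rewrite (subR h Hb1).
- by move: Hb; rewrite (subL h Ha2).
Qed.

Lemma three (S1 S2 S3 : 'M[F]_n) : \rank S1 < n.-1 -> \rank S2 < n -> \rank S3 < n ->
  exists v : 'rV[F]_n, [&& ~~ (v <= S1)%MS, ~~ (v <= S2)%MS & ~~ (v <= S3)%MS].
Proof.
move=> h1 h2 h3.
have h1' : \rank S1 < n by lia.
have [x /andP[x1 x2]] := two h1' h2.
case: (boolP (x <= S3)%MS) => x3; last by exists x; rewrite x1 x2 x3.
have hT : \rank (S1 + <<x>>%MS)%MS < n.
  have := mxrank_adds_leqif S1 <<x>>%MS; case=> + _.
  rewrite genmxE; have := rank_leq_row x; lia.
have [y /andP[yT y3]] := two hT h3.
have y1 : ~~ (y <= S1)%MS.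
  by apply: contra yT => h; apply: submx_trans h (addsmxSl _ _).
have xT : (x <= S1 + <<x>>)%MS by apply: submx_trans (addsmxSr _ _); rewrite genmxE.
case: (boolP (y <= S2)%MS) => y2; last by exists y; rewrite y1 y2 y3.
exists (x + y)%R; apply/and3P; split; apply/negP => h.
- by move: yT; rewrite (subL (submx_trans h (addsmxSl _ _)) xT).
- by move: x2; rewrite (subR h y2).
- by move: y3; rewrite (subL h x3).
Qed.

Lemma mrank_n : mrank M = n.
Proof.
rewrite /mrank frk; apply/eqP; rewrite eqn_leq rank_leq_col /=.
rewrite -{1}(mxrank1 F n); apply: mxrankS; apply/row_subP => i.
case: (eqVneq (row i ((1%:M)%R : 'M[F]_n)) 0%R) => [->|nz]; first exact: sub0mx.
have [e /eqmxP he] := fsurj nz.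
by rewrite he; apply: sub_span; rewrite inE.
Qed.

Lemma compl_full X : rk M X < n -> rk M (~: X) = n.
Proof.
rewrite !frk => hX; have [w Hw] := no_vec hX.
have key : forall v : 'rV[F]_n, ~~ (v <= span X)%MS -> (v <= span (~: X))%MS.
  move=> v hv; have nz : (v != 0)%R by apply: contra hv => /eqP ->; exact: sub0mx.
  have [e /eqmxP he] := fsurj nz; rewrite he; apply: sub_span.
  rewrite inE; apply: contra hv => eX; rewrite he; exact: sub_span.
apply/eqP; rewrite eqn_leq rank_leq_col /=.
rewrite -{1}(mxrank1 F n); apply: mxrankS; apply/row_subP => i.
set v := row i _.
case: (boolP (v <= span X)%MS) => hv; last exact: key.
have hvw : ~~ ((v + w)%R <= span X)%MS by apply: contra Hw => h; exact: subL h hv.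
have hw' := key _ Hw; have hvw' := key _ hvw.
exact: subR hvw' hw'.
Qed.

Lemma conn_small X : rk M X < n -> conn M X = rk M X.
Proof. by move=> h; rewrite /conn compl_full // mrank_n addnK. Qed.

Lemma rk0 : rk M set0 = 0.
Proof. by apply/eqP; rewrite -leqn0; have := rk_card M set0; rewrite cards0. Qed.

Lemma inT X : rk M X < n.-1 -> X \in Tcal M n.
Proof.
move=> hX; have hXn : rk M X < n by lia.
rewrite inE /separating conn_small // hX /spanning mrank_n /=.
rewrite neq_ltn hXn /=.
have [c cX] : exists c, c \notin X.
  case: (boolP [exists c, c \notin X]) => [/existsP//|/existsPn H].
  have XT : X = setT by apply/setP => c; have := H c; rewrite negbK inE.
  by move: hXn; rewrite XT -/(mrank M) mrank_n ltnn.
have hcX : rk M (c |: X) < n.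
  have := rk_submod M [set c] X; have := rk_card M [set c]; rewrite cards1; lia.
have hc := compl_full hcX.
have h1 := rk_card M (~: (c |: X)); rewrite hc in h1.
have h2 := cardsC (c |: X); rewrite cardsU1 cX in h2.
have h3 := cardsC X.
rewrite /cospanning /dual_rk compl_full // mrank_n setCT rk0 cardsT.
apply/eqP; lia.
Qed.

Lemma T_small X : X \in Tcal M n -> rk M X < n.-1.
Proof.
rewrite inE => /andP[/andP[hs hsp] _].
have hXn : rk M X < n.
  have := rk_mono M (subsetT X); rewrite -/(mrank M) mrank_n.
  by move: hsp; rewrite /spanning mrank_n; lia.
by move: hs; rewrite /separating conn_small.
Qed.

Lemma cover X Y Z : rk M X < n.-1 -> rk M Y < n -> rk M Z < n -> X :|: Y :|: Z != setT.
Proof.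
rewrite !frk => hX hY hZ; have [v /and3P[vX vY vZ]] := three hX hY hZ.
apply/eqP => hU.
have nz : (v != 0)%R by apply: contra vX => /eqP ->; exact: sub0mx.
have [e /eqmxP he] := fsurj nz.
have : e \in X :|: Y :|: Z by rewrite hU inE.
rewrite !inE => /orP[/orP[]|] he'.
- by move: vX; rewrite he (sub_span he').
- by move: vY; rewrite he (sub_span he').
- by move: vZ; rewrite he (sub_span he').
Qed.

Lemma main_tangle : 0 < n -> is_tangle M n (Tcal M n).
Proof.
move=> n0; split => //.
- by move=> X; rewrite inE => /andP[/andP[]].
- move=> X; rewrite /separating => hs.
  case: (ltnP (rk M X) n) => hX.
    by left; apply: inT; rewrite -conn_small.
  have hXe : rk M X = n.
    by apply/eqP; rewrite eqn_leq hX andbT -(mrank_n) rk_mono ?subsetT.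
  have hc : rk M (~: X) < n.-1.
    by move: hs; rewrite /conn hXe mrank_n; lia.
  by right; apply: inT.
- move=> X Y Z /T_small hX /T_small hY /T_small hZ; apply: cover => //; lia.
- move=> e; apply/negP => /T_small h.
  have h1 : rk M [set e] < n by have := rk_card M [set e]; rewrite cards1; lia.
  have h2 : rk M (~: [set e]) < n by lia.
  have := cover h h1 h2; move/negP; apply; apply/eqP/setP => x.
  by rewrite !inE; case: (x == e).
Qed.
End PG.

Theorem lemma6p3 (F : finFieldType) (n : nat) (E : finType) (M : matroid E) :
  0 < n -> iso_PG M F n -> is_tangle M n (Tcal M n).
Proof.
move=> n0 [f [f0 _ fs fr]]; exact: (main_tangle fs fr n0). Qed.
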